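(* Let $n=2$ and let $M$ be a Griffiths positive $2\times 2$ matrix of constant coefficient $(1,1)$-forms on $\mathbb{C}^2$. Then $\det(M)$ is a Hodge-Riemann form (with respect to any Kähler form $\omega$).
   Context: $V^{p,q}$ is the space of constant coefficient $(p,q)$-forms on $\mathbb{C}^n$; $V^{k,k}_{\mathbb{R}}$ is the set of real forms $\Omega=\overline{\Omega}$ in $V^{k,k}$. A $(1,1)$-form is Kähler if it equals $\sum_l\frac{\sqrt{-1}}{2}dw_l\wedge d\overline{w_l}$ in some complex linear coordinates. A matrix $M=(\alpha_{i,j})$ of $(1,1)$-forms with $\alpha_{i,j}=\overline{\alpha_{j,i}}$ is Griffiths positive if $\sum_{i,j}\theta_i\alpha_{i,j}\overline{\theta_j}$ is Kähler for all nonzero $\theta$; $\det(M)=\alpha_{1,1}\wedge\alpha_{2,2}-\alpha_{1,2}\wedge\alpha_{2,1}$. A form $\Omega\in V^{k,k}$ is a Lefschetz form for bidegree $(p,q)$ (with $p+q=n-k$) if $\alpha\mapsto\alpha\wedge\Omega$ is an isomorphism $V^{p,q}\to V^{n-q,n-p}$. Given a Kähler form $\omega$, $\Omega\in V^{k,k}_{\mathbb{R}}$ is a Hodge-Riemann form if for every $(p,q)$ with $p,q\geqslant 0$, $p+q=n-k$, there is a continuous path $\Omega_t\in V^{k,k}_{\mathbb{R}}$, $t\in[0,1]$, with $\Omega_0=\Omega$, $\Omega_1=\omega^k$, such that $\Omega_t\wedge\omega^{2r}$ is a Lefschetz form for bidegree $(p-r,q-r)$ for all $0\leqslant r\leqslant\min\{p,q\}$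 and all $t\in[0,1]$. *)

(* Defs.v *)
From mathcomp Require Import all_boot all_order all_algebra.
From mathcomp Require Import all_classical all_reals all_analysis.
From mathcomp Require Import complex.

Set Implicit Arguments.
Unset Strict Implicit.
Unset Printing Implicit Defensive.
Import Order.TTheory GRing.Theory Num.Theory numFieldNormedType.Exports.
Local Open Scope ring_scope.

(* The real cotangent basis is indexed by 'I_(n+n):
     index  lshift n i  (value i)      stands for dz_i       (i < n),
     index  rshift n i  (value n + i)  stands for dz̄_i.
   A form is the function K |-> coefficient of e_K, where for
   K = {k_1 < ... < k_m}, e_K = e_{k_1} /\ ... /\ e_{k_m}. *)

Section Forms.
Variables (R : realType) (n : nat).

Definition cform := {ffun {set 'I_(n+n)} -> R[i]}.

(* sign of reordering e_I /\ e_J (I, J disjoint) into e_(I :|: J) *)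
Definition wsign (I J : {set 'I_(n+n)}) : R[i] :=
  (-1) ^+ #|[set x : 'I_(n+n) * 'I_(n+n) |
              [&& x.1 \in I, x.2 \in J & (x.2 < x.1)%N]]|.

Definition wedge (a b : cform) : cform :=
  [ffun K => \sum_(I : {set 'I_(n+n)}) \sum_(J : {set 'I_(n+n)})
     if (I :&: J == finset.set0) && (I :|: J == K) then wsign I J * a I * b J else 0].

Definition one_form : cform := [ffun K => (K == finset.set0)%:R].

Definition wpow (a : cform) (k : nat) : cform := iter k (wedge a) one_form.

(* complex conjugation on indices: dz_i <-> dz̄_i *)
Definition conj_idx (i : 'I_(n+n)) : 'I_(n+n) :=
  insubd i (if (i < n)%N then (i + n)%N else (i - n)%N).

(* sign of reordering e_{σ k_1} /\ ... /\ e_{σ k_m} into e_{σ(K)} *)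
Definition csign (I : {set 'I_(n+n)}) : R[i] :=
  (-1) ^+ #|[set x : 'I_(n+n) * 'I_(n+n) |
              [&& x.1 \in I, x.2 \in I, (x.1 < x.2)%N &
                  (conj_idx x.2 < conj_idx x.1)%N]]|.

Definition conjf (a : cform) : cform :=
  [ffun K => \sum_(I : {set 'I_(n+n)})
     if conj_idx @: I == K then csign I * conjc (a I) else 0].

Definition holo_idx : {set 'I_(n+n)} := [set i : 'I_(n+n) | (i < n)%N].
Definition anti_idx : {set 'I_(n+n)} := ~: holo_idx.

Definition isPQ (p q : nat) (a : cform) : Prop :=
  forall I : {set 'I_(n+n)}, a I != 0 ->
    #|I :&: holo_idx| = p /\ #|I :&: anti_idx| = q.

Definition real_form (a : cform) : Prop := conjf a = a.

Definition dz (i : 'I_n) : cform := [ffun K => (K == [set lshift n i])%:R].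
Definition dzbar (i : 'I_n) : cform := [ffun K => (K == [set rshift n i])%:R].

(* dw_l for the complex linear coordinates w = A z *)
Definition dw (A : 'M[R[i]]_n) (l : 'I_n) : cform := \sum_(j < n) A l j *: dz j.

Definition Kahler (w : cform) : Prop :=
  exists A : 'M[R[i]]_n, A \in unitmx /\
    w = \sum_(l < n) ('i / 2) *: wedge (dw A l) (conjf (dw A l)).

Definition Griffiths_positive (m : nat) (M : 'I_m -> 'I_m -> cform) : Prop :=
  forall theta : 'I_m -> R[i], (exists i, theta i != 0) ->
    Kahler (\sum_(i < m) \sum_(j < m) (theta i * conjc (theta j)) *: M i j).

Definition det2 (M : 'I_2 -> 'I_2 -> cform) : cform :=
  wedge (M 0 0) (M 1 1) - wedge (M 0 1) (M 1 0).

Definition Lefschetz (p q : nat) (Om : cform) : Prop :=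
  [/\ forall a, isPQ p q a -> isPQ (n - q) (n - p) (wedge a Om),
      forall a, isPQ p q a -> wedge a Om = 0 -> a = 0 &
      forall b, isPQ (n - q) (n - p) b -> exists a, isPQ p q a /\ wedge a Om = b].

Definition path_continuous (P : R -> cform) : Prop :=
  forall K : {set 'I_(n+n)},
    ({within [set t : R | (0 <= t <= 1)%R], continuous (fun t : R => complex.Re (P t K))})%classic /\
    ({within [set t : R | (0 <= t <= 1)%R], continuous (fun t : R => complex.Im (P t K))})%classic.

Definition Hodge_Riemann (k : nat) (w Om : cform) : Prop :=
  [/\ isPQ k k Om, real_form Om &
   forall p q : nat, (p + q = n - k)%N ->
     exists P : R -> cform,
       [/\ P 0 = Om, P 1 = wpow w k, path_continuous P,
           forall t : R, 0 <= t <= 1 -> isPQ k k (P t) /\ real_form (P t) &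
           forall t : R, 0 <= t <= 1 -> forall r : nat, (r <= minn p q)%N ->
             Lefschetz (p - r) (q - r) (wedge (P t) (wpow w (2 * r)))]].

End Forms.

(* Main.v *)
Require Import Defs.
From mathcomp Require Import all_boot all_order all_algebra.
From mathcomp Require Import all_classical all_reals all_analysis.
From mathcomp Require Import complex.
From mathcomp Require Import ring lra.
Import Order.TTheory GRing.Theory Num.Theory numFieldNormedType.Exports.
Local Open Scope ring_scope.

Module CoreM.
Local Open Scope complex_scope.
Lemma sum2 (V : nmodType) (F : 'I_2 -> V) : \sum_(i < 2) F i = F 0 + F 1.
Proof. by rewrite !big_ord_recl big_ord0 addr0; congr (F _ + F _); apply: val_inj. Qed.

Section Aux.
Variable R : rcfType.
Lemma posC (x : R[i]) : 0 < x -> x = (complex.Re x)%:C%C /\ 0 < complex.Re x.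
Proof. case: x => a b; rewrite ltcE /= => /andP[/eqP hb h]. by rewrite hb; split. Qed.

Lemma finalR (dr br ar be p q r s : R) : 0 < dr -> 0 < br -> 0 < ar -> 0 < be ->
  0 < dr%:C%C * br%:C%C - (p +i* q) * conjc (p +i* q) ->
  0 < ar%:C%C * be%:C%C - (r +i* s) * conjc (r +i* s) ->
  0 < dr%:C%C * be%:C%C + ar%:C%C * br%:C%C - ((p +i* q) * conjc (r +i* s) + conjc (p +i* q) * (r +i* s)).
Proof.
move=> d0 b0 a0 e0. rewrite !ltcE /= => /andP[_ h1] /andP[_ h2].
apply/andP; split; first by apply/eqP; ring.
have hX : 0 < dr * be by apply: mulr_gt0.
have hY : 0 < ar * br by apply: mulr_gt0.
have h3 : (p * r + q * s)^+2 <= (p * p + q * q) * (r * r + s * s).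
  rewrite -subr_ge0.
  have -> : (p * p + q * q) * (r * r + s * s) - (p * r + q * s)^+2 = (p * s - q * r)^+2 by ring.
  exact: sqr_ge0.
have h4 : (p * p + q * q) * (r * r + s * s) < (dr * br) * (ar * be).
  have hpq : 0 <= p * p + q * q by nra.
  have hrs : 0 <= r * r + s * s by nra.
  nra.
have hXY : (p * r + q * s)^+2 < (dr * be) * (ar * br).
  have -> : (dr * be) * (ar * br) = (dr * br) * (ar * be) by ring.
  exact: le_lt_trans h3 h4.
have -> : dr * be - 0 * 0 + (ar * br - 0 * 0) - (p * r - q * - s + (p * r - - q * s)) = dr * be + ar * br - 2 * (p * r + q * s) by ring.
move: hX hY hXY; set X := dr * be; set Y := ar * br; set k := p * r + q * s => hX hY hXY.
rewrite subr_gt0.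
case: (lerP (X + Y) (2 * k)) => // hc.
have h5 : (X + Y) * (X + Y) <= (2 * k) * (2 * k).
  by apply: ler_pM => //; apply: ltW; apply: addr_gt0.
have h6 : 0 <= (X - Y) ^+ 2 := sqr_ge0 _.
nra.
Qed.

Lemma finalC (dr br ar be : R) (c g : R[i]) : 0 < dr -> 0 < br -> 0 < ar -> 0 < be ->
  0 < dr%:C%C * br%:C%C - c * conjc c ->
  0 < ar%:C%C * be%:C%C - g * conjc g ->
  0 < dr%:C%C * be%:C%C + ar%:C%C * br%:C%C - (c * conjc g + conjc c * g).
Proof. by case: c => p q; case: g => r s; apply: finalR. Qed.

Lemma finalC' (d b a be c g : R[i]) : 0 < d -> 0 < b -> 0 < a -> 0 < be ->
  0 < d * b - c * conjc c -> 0 < a * be - g * conjc g ->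
  0 < d * be + a * b - (c * conjc g + conjc c * g).
Proof.
move=> /posC[-> d0] /posC[-> b0] /posC[-> a0] /posC[-> e0].
exact: finalC.
Qed.
End Aux.

Section Core.
Variable R : rcfType.
Local Notation C := R[i].
Variable N : 'I_2 -> 'I_2 -> 'I_2 -> 'I_2 -> C.
Hypothesis herm : forall i j a b, N i j a b = conjc (N j i b a).

Definition vec2 (s t : C) : 'I_2 -> C := fun i => if i == 0 then s else t.

Definition Qf (th x : 'I_2 -> C) := \sum_(i < 2) \sum_(j < 2) \sum_(a < 2) \sum_(b < 2)
   th i * conjc (th j) * x a * conjc (x b) * N i j a b.

Hypothesis pos : forall th x : 'I_2 -> C, (exists i, th i != 0) -> (exists a, x a != 0) -> 0 < Qf th x.

Lemma Qf2 s t u v : Qf (vec2 s t) (vec2 u v) =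
  let al := u * conjc u * N 0 0 0 0 + u * conjc v * N 0 0 0 1 + v * conjc u * N 0 0 1 0 + v * conjc v * N 0 0 1 1 in
  let be := u * conjc u * N 1 1 0 0 + u * conjc v * N 1 1 0 1 + v * conjc u * N 1 1 1 0 + v * conjc v * N 1 1 1 1 in
  let ga := u * conjc u * N 0 1 0 0 + u * conjc v * N 0 1 0 1 + v * conjc u * N 0 1 1 0 + v * conjc v * N 0 1 1 1 in
  let ga' := u * conjc u * N 1 0 0 0 + u * conjc v * N 1 0 0 1 + v * conjc u * N 1 0 1 0 + v * conjc v * N 1 0 1 1 in
  s * conjc s * al + t * conjc t * be + s * conjc t * ga + t * conjc s * ga'.
Proof. rewrite /Qf !sum2 /vec2 /=. ring. Qed.


Definition Dq i j u v := u * conjc u * N i j 0 0 + u * conjc v * N i j 0 1 + v * conjc u * N i j 1 0 + v * conjc v * N i j 1 1.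

Lemma conjDq i j u v : conjc (Dq i j u v) = Dq j i u v.
Proof.
rewrite /Dq !rmorphD !rmorphM /= !conjcK -!herm.
by rewrite [conjc u * v]mulrC [conjc v * u]mulrC; ring.
Qed.

Lemma Qf2' s t u v : Qf (vec2 s t) (vec2 u v) =
  s * conjc s * Dq 0 0 u v + t * conjc t * Dq 1 1 u v + s * conjc t * Dq 0 1 u v + t * conjc s * Dq 1 0 u v.
Proof. by rewrite Qf2. Qed.

Lemma key2 u v : (u != 0 \/ v != 0) ->
  0 < Dq 0 0 u v /\ 0 < Dq 0 0 u v * Dq 1 1 u v - Dq 0 1 u v * conjc (Dq 0 1 u v).
Proof.
move=> nz.
have hx : exists a, vec2 u v a != 0.
  by case: nz => h; [exists 0 | exists 1].
have al0 : 0 < Dq 0 0 u v.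
  have := pos (vec2 1 0) (vec2 u v) _ hx.
  rewrite Qf2' !rmorph0 !rmorph1 !(mul0r, mulr0, addr0, mul1r); apply.
  by exists 0; rewrite /vec2 /= oner_eq0.
split => //.
have alr : conjc (Dq 0 0 u v) = Dq 0 0 u v by rewrite conjDq.
have := pos (vec2 (- conjc (Dq 0 1 u v)) (Dq 0 0 u v)) (vec2 u v) _ hx.
rewrite Qf2' rmorphN /= conjcK alr -(conjDq 0 1).
set a := Dq 0 0 u v; set b := Dq 1 1 u v; set g := Dq 0 1 u v.
have -> : - conjc g * - g * a + a * a * b + - conjc g * a * g + a * - g * conjc g
   = a * (a * b - g * conjc g) by ring.
rewrite pmulr_rgt0 //; apply.
by exists 1; rewrite /vec2 /= lt0r_neq0.
Qed.


Definition Tval := N 0 0 0 0 * N 1 1 1 1 + N 0 0 1 1 * N 1 1 0 0 - N 0 0 0 1 * N 1 1 1 0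
  - N 0 0 1 0 * N 1 1 0 1 - (N 0 1 0 0 * N 1 0 1 1 + N 0 1 1 1 * N 1 0 0 0
  - N 0 1 0 1 * N 1 0 1 0 - N 0 1 1 0 * N 1 0 0 1).

Lemma Tid : let d := N 0 0 0 0 in let u := N 0 0 1 0 in
  d ^+ 2 * Tval = d * Dq 1 1 u (-d) + Dq 0 0 u (-d) * N 1 1 0 0
    - (N 0 1 0 0 * conjc (Dq 0 1 u (-d)) + conjc (N 0 1 0 0) * Dq 0 1 u (-d))
    + (conjc u * N 0 1 0 0 - d * N 0 1 0 1) * conjc (conjc u * N 0 1 0 0 - d * N 0 1 0 1)
    + (u * N 0 1 0 0 - d * N 0 1 1 0) * conjc (u * N 0 1 0 0 - d * N 0 1 1 0).
Proof.
move=> d u; rewrite conjDq /Dq /d /u !rmorphB !rmorphM !rmorphN /= !conjcK -!herm.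
rewrite /Tval; ring.
Qed.

Lemma Dq10 i j : Dq i j 1 0 = N i j 0 0.
Proof. by rewrite /Dq rmorph0 rmorph1; ring. Qed.

Lemma core_pos : 0 < Tval.
Proof.
have [hd hA0] := key2 1 0 (or_introl (oner_neq0 _)).
rewrite !Dq10 in hd hA0.
have dn0 : - N 0 0 0 0 != 0 by rewrite oppr_eq0 lt0r_neq0.
have [ha1 hA1] := key2 (N 0 0 1 0) (- N 0 0 0 0) (or_intror dn0).
have gg0 (g : R[i]) : 0 <= g * conjc g := mulcJ_ge0 g.
have pos2 (a b g : R[i]) : 0 < a -> 0 < a * b - g * conjc g -> 0 < b.
  move=> a0 h; rewrite -(pmulr_rgt0 _ a0).
  by apply: lt_le_trans h _; rewrite gerBl.
have hb0 := pos2 _ _ _ hd hA0.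
have hbe := pos2 _ _ _ ha1 hA1.
have /(pmulr_rgt0 Tval) <- : 0 < N 0 0 0 0 ^+ 2 by rewrite exprn_gt0.
rewrite Tid.
apply: ltr_wpDr; first exact: gg0.
apply: ltr_wpDr; first exact: gg0.
exact: finalC'.
Qed.

End Core.

End CoreM.
Import CoreM.

Set Implicit Arguments.
Unset Strict Implicit.
Unset Printing Implicit Defensive.

Lemma det2E (K : comPzRingType) (A : 'M[K]_2) : \det A = A 0 0 * A 1 1 - A 0 1 * A 1 0.
Proof.
rewrite (expand_det_row A 0) sum2 /cofactor !det_mx11 !mxE /=.
have -> : lift 0 (0 : 'I_1) = 1 :> 'I_2 by apply: val_inj.
have -> : lift 1 (0 : 'I_1) = 0 :> 'I_2 by apply: val_inj.
rewrite expr0 expr1; ring.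
Qed.

Section F.
Variable R : realType.
Local Notation cf := (cform R 2).
Local Notation T4 := 'I_(2+2).
Local Notation sig := (@conj_idx 2).
Definition hh (x y : 'I_2) : {set T4} := [set lshift 2 x; rshift 2 y].

Lemma card_pairs (P : pred (T4 * T4)) : #|[set x | P x]| = (\sum_(i : T4) \sum_(j : T4) P (i, j))%N.
Proof.
rewrite -sum1dep_card big_mkcond [RHS]pair_bigA /=.
by apply: eq_bigr => [[i j]] _ /=; case: (P _).
Qed.

Lemma addfE (a b : cf) K : (a + b) K = a K + b K.
Proof. by rewrite !ffunE. Qed.
Lemma subfE (a b : cf) K : (a - b) K = a K - b K.
Proof. by rewrite !ffunE. Qed.
Lemma scalefE (c : R[i]) (a : cf) K : (c *: a) K = c * a K.
Proof. by rewrite !ffunE. Qed.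

Lemma conj_idxK : involutive (@conj_idx 2).
Proof.
move=> i; apply: val_inj; rewrite /conj_idx !val_insubd.
case: i => [[|[|[|[|m]]]] hi] //=.
Qed.

Lemma conj_imsetK (K : {set T4}) : sig @: (sig @: K) = K.
Proof.
by rewrite -imset_comp (eq_imset _ conj_idxK) imset_id.
Qed.

Lemma conjfE (a : cf) K : conjf a K = csign R (sig @: K) * conjc (a (sig @: K)).
Proof.
rewrite ffunE (bigD1 (sig @: K)) //= conj_imsetK eqxx big1 ?addr0 //.
move=> I /negbTE hI; case: ifP => // /eqP hK.
by move: hI; rewrite -hK conj_imsetK eqxx.
Qed.


Lemma sum_neq0_ex (I : finType) (F : I -> R[i]) : \sum_i F i != 0 -> exists i, F i != 0.
Proof.
case: (pickP (fun i => F i != 0)) => [i hi _ | h0]; first by exists i.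
by rewrite big1 ?eqxx // => i _; move: (h0 i) => /negbFE/eqP.
Qed.

Lemma cardU_disj (A B : {set T4}) : A :&: B = finset.set0 -> #|A :|: B| = (#|A| + #|B|)%N.
Proof. by move=> h; rewrite cardsU h cards0 subn0. Qed.

Lemma isPQ_wedge p q p' q' (a b : cf) : isPQ p q a -> isPQ p' q' b ->
  isPQ (p + p') (q + q') (wedge a b).
Proof.
move=> ha hb K; rewrite ffunE => /sum_neq0_ex[I /sum_neq0_ex[J]].
case: ifP => [/andP[/eqP hIJ /eqP <-] | _]; last by rewrite eqxx.
rewrite !mulf_eq0 !negb_or => /andP[/andP[_ /ha[h1 h2]] /hb[h3 h4]].
rewrite !finset.setIUl !cardU_disj ?h1 ?h2 ?h3 ?h4 //.
  by rewrite finset.setIACA hIJ finset.set0I.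
by rewrite finset.setIACA hIJ finset.set0I.
Qed.

Lemma isPQ_add p q (a b : cf) : isPQ p q a -> isPQ p q b -> isPQ p q (a + b).
Proof.
move=> ha hb K; rewrite addfE => h.
have [a0|/ha //] := eqVneq (a K) 0.
by apply: hb; rewrite a0 add0r in h.
Qed.

Lemma isPQ_scale p q c (a : cf) : isPQ p q a -> isPQ p q (c *: a).
Proof. by move=> ha K; rewrite scalefE mulf_eq0 negb_or => /andP[_ /ha]. Qed.

Lemma isPQ_sum p q (X : finType) (F : X -> cf) : (forall i, isPQ p q (F i)) -> isPQ p q (\sum_i F i).
Proof.
move=> hF K; rewrite sum_ffunE => h; have [i hi] := sum_neq0_ex h; exact: hF hi.
Qed.

Lemma isPQ11_supp (a : cf) K : isPQ 1 1 a -> a K != 0 -> exists x y, K = hh x y.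
Proof.
move=> ha /ha[/eqP/cards1P[u hu] /eqP/cards1P[v hv]].
have Ku : u \in holo_idx 2.
  have : u \in K :&: holo_idx 2 by rewrite hu finset.set11.
  by rewrite inE => /andP[].
have Kv : v \in anti_idx 2.
  have : v \in K :&: anti_idx 2 by rewrite hv finset.set11.
  by rewrite inE => /andP[].
have hK : K = [set u; v].
  by rewrite -hu -hv -finset.setIUr /anti_idx finset.setUCr finset.setIT.
move: Ku Kv; rewrite /anti_idx /holo_idx !inE.
case: (splitP u) => [x hx | x hx] //.
case: (splitP v) => [y hy | y hy] //.
move=> _ _; exists x, y; rewrite hK /hh; congr [set _; _]; exact: val_inj.
Qed.

Lemma isPQ22_supp (a : cf) K : isPQ 2 2 a -> a K != 0 -> K = [set: T4].
Proof.
move=> ha /ha[h1 h2]; apply/eqP; rewrite eqEcard finset.subsetT finset.cardsT card_ord.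
by rewrite -(cardsID (holo_idx 2) K) finset.setDE h1 -/(anti_idx 2) h2.
Qed.

Lemma isPQ00_supp (a : cf) K : isPQ 0 0 a -> a K != 0 -> K = finset.set0.
Proof.
move=> ha /ha[h1 h2]; apply/eqP; rewrite -cards_eq0.
by rewrite -(cardsID (holo_idx 2) K) finset.setDE h1 -/(anti_idx 2) h2.
Qed.


Lemma val_conj (i : T4) : nat_of_ord (sig i) = (if (i < 2)%N then (i + 2)%N else (i - 2)%N).
Proof. by rewrite /conj_idx val_insubd; case: i => [[|[|[|[|m]]]] hi]. Qed.

Lemma sig_l x : sig (lshift 2 x) = rshift 2 x.
Proof. by apply: val_inj; rewrite /conj_idx val_insubd /= ltn_ord addnC ltn_add2l ltn_ord. Qed.

Lemma sig_r x : sig (rshift 2 x) = lshift 2 x.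
Proof. by case: x => [[|[|m]] hx] //; apply: val_inj; rewrite /conj_idx val_insubd. Qed.

Lemma sig_hh a b : sig @: hh a b = hh b a.
Proof. by rewrite /hh imsetU !imset_set1 sig_l sig_r finset.setUC. Qed.

Lemma sig_set1l a : sig @: [set lshift 2 a] = [set rshift 2 a].
Proof. by rewrite imset_set1 sig_l. Qed.

Lemma sig_set1r a : sig @: [set rshift 2 a] = [set lshift 2 a].
Proof. by rewrite imset_set1 sig_r. Qed.

Lemma sig_T : sig @: [set: T4] = [set: T4].
Proof.
apply/setP => k; rewrite inE; apply/imsetP; exists (sig k) => //.
by rewrite conj_idxK.
Qed.

Lemma csign_l a : csign R [set lshift 2 a] = 1.
Proof.
by case: a => [[|[|m]] ha] //; rewrite /csign ?/hh card_pairs !big_ord_recl !big_ord0 !inE !val_conj /= -signr_odd /= ?expr0 ?expr1.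
Qed.

Lemma csign_r a : csign R [set rshift 2 a] = 1.
Proof.
by case: a => [[|[|m]] ha] //; rewrite /csign ?/hh card_pairs !big_ord_recl !big_ord0 !inE !val_conj /= -signr_odd /= ?expr0 ?expr1.
Qed.

Lemma csign_hh a b : csign R (hh a b) = -1.
Proof.
by case: a => [[|[|m]] ha] //; case: b => [[|[|m]] hb] //;
  rewrite /csign ?/hh card_pairs !big_ord_recl !big_ord0 !inE !val_conj /= -signr_odd /= ?expr0 ?expr1.
Qed.

Lemma csign_T : csign R [set: T4] = 1.
Proof.
by rewrite /csign card_pairs !big_ord_recl !big_ord0 !inE !val_conj /= -signr_odd /= ?expr0 ?expr1.
Qed.

Lemma wsign_lr a b : wsign R [set lshift 2 a] [set rshift 2 b] = 1.
Proof.
by case: a => [[|[|m]] ha] //; case: b => [[|[|m]] hb] //;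
  rewrite /wsign ?/hh card_pairs !big_ord_recl !big_ord0 !inE /=.
Qed.

Lemma compl_hh00 : ~: hh 0 0 = hh 1 1.
Proof. by apply/setP => k; rewrite /hh !inE; case: k => [[|[|[|[|m]]]] hk]. Qed.
Lemma compl_hh01 : ~: hh 0 1 = hh 1 0.
Proof. by apply/setP => k; rewrite /hh !inE; case: k => [[|[|[|[|m]]]] hk]. Qed.
Lemma compl_hh10 : ~: hh 1 0 = hh 0 1.
Proof. by apply/setP => k; rewrite /hh !inE; case: k => [[|[|[|[|m]]]] hk]. Qed.
Lemma compl_hh11 : ~: hh 1 1 = hh 0 0.
Proof. by apply/setP => k; rewrite /hh !inE; case: k => [[|[|[|[|m]]]] hk]. Qed.

Lemma wsign_hh00 : wsign R (hh 0 0) (hh 1 1) = -1.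
Proof. by rewrite /wsign ?/hh card_pairs !big_ord_recl !big_ord0 !inE /= -signr_odd /= ?expr0 ?expr1. Qed.
Lemma wsign_hh01 : wsign R (hh 0 1) (hh 1 0) = 1.
Proof. by rewrite /wsign ?/hh card_pairs !big_ord_recl !big_ord0 !inE /= -signr_odd /= ?expr0 ?expr1. Qed.
Lemma wsign_hh10 : wsign R (hh 1 0) (hh 0 1) = 1.
Proof. by rewrite /wsign ?/hh card_pairs !big_ord_recl !big_ord0 !inE /= -signr_odd /= ?expr0 ?expr1. Qed.
Lemma wsign_hh11 : wsign R (hh 1 1) (hh 0 0) = -1.
Proof. by rewrite /wsign ?/hh card_pairs !big_ord_recl !big_ord0 !inE /= -signr_odd /= ?expr0 ?expr1. Qed.

End F.

Section G.
Variable R : realType.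
Local Notation cf := (cform R 2).
Local Notation T4 := 'I_(2+2).
Local Notation sig := (@conj_idx 2).

Lemma compl_uniq (I J : {set T4}) : I :&: J = finset.set0 -> I :|: J = [set: T4] -> J = ~: I.
Proof.
move=> hI hU; apply/setP => x; rewrite !inE.
move/setP: hU => /(_ x); move/setP: hI => /(_ x); rewrite !inE.
by case: (x \in I); case: (x \in J).
Qed.

Lemma hh_inj x y x' y' : hh x y = hh x' y' -> x = x' /\ y = y'.
Proof.
move=> h; split.
  have : lshift 2 x \in hh x' y' by rewrite -h /hh !inE eqxx.
  rewrite /hh !inE => /orP[/eqP/lshift_inj // | /eqP/eqP].
  by rewrite eq_lrshift.
have : rshift 2 y \in hh x' y' by rewrite -h /hh !inE eqxx orbT.
rewrite /hh !inE => /orP[/eqP/eqP | /eqP/rshift_inj //].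
by rewrite eq_rlshift.
Qed.


Lemma wedge_T_inner (a b : cf) I : \sum_J (if (I :&: J == finset.set0) && (I :|: J == [set: T4])
   then wsign R I J * a I * b J else 0) = wsign R I (~: I) * a I * b (~: I).
Proof.
rewrite (bigD1 (~: I)) //= finset.setICr finset.setUCr !eqxx /= big1 ?addr0 // => J hJ.
case: ifP => // /andP[/eqP h1 /eqP h2].
by move: hJ; rewrite (compl_uniq h1 h2) eqxx.
Qed.

Lemma sum_supp11 (G : {set T4} -> R[i]) : (forall I, G I != 0 -> exists x y, I = hh x y) ->
  \sum_I G I = \sum_x \sum_y G (hh x y).
Proof.
move=> hG.
rewrite (bigID (mem [set hh p.1 p.2 | p : 'I_2 * 'I_2])) /=.
rewrite [X in _ + X]big1 ?addr0; last first.
  move=> I hI; apply/eqP; apply: contraNT hI => /hG[x [y ->]].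
  by apply/imsetP; exists (x, y).
rewrite big_imset /=; last by move=> [x y] [x' y'] _ _ /= /hh_inj [-> ->].
by rewrite pair_bigA /=; apply: eq_bigl.
Qed.

Lemma wedge11_T (a b : cf) : isPQ 1 1 a -> isPQ 1 1 b ->
  wedge a b [set: T4] = - (a (hh 0 0) * b (hh 1 1)) + a (hh 0 1) * b (hh 1 0)
     + a (hh 1 0) * b (hh 0 1) - a (hh 1 1) * b (hh 0 0).
Proof.
move=> ha hb; rewrite ffunE.
under eq_bigr do rewrite wedge_T_inner.
rewrite sum_supp11; last first.
  move=> I; rewrite !mulf_eq0 !negb_or => /andP[/andP[_ h] _]; exact: isPQ11_supp ha h.
rewrite !sum2 compl_hh00 compl_hh01 compl_hh10 compl_hh11.
rewrite wsign_hh00 wsign_hh01 wsign_hh10 wsign_hh11; ring.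
Qed.

Lemma wedge_lr (a b : cf) x y :
  (forall K, a K != 0 -> exists j, K = [set lshift 2 j]) ->
  (forall K, b K != 0 -> exists j, K = [set rshift 2 j]) ->
  wedge a b (hh x y) = a [set lshift 2 x] * b [set rshift 2 y].
Proof.
move=> ha hb; rewrite ffunE (bigD1 [set lshift 2 x]) //= (bigD1 [set rshift 2 y]) //=.
have hd : [set lshift 2 x] :&: [set rshift 2 y] == finset.set0.
  apply/eqP/setP => k; rewrite !inE; case: (k =P lshift 2 x) => // ->.
  by rewrite eq_lrshift.
rewrite hd /= eqxx wsign_lr mul1r.
rewrite big1 ?addr0; last first.
  move=> J hJ; case: ifP => // /andP[_ /eqP hU].
  have [b0|/hb [j hj]] := eqVneq (b J) 0; first by rewrite b0 mulr0.
  move: hU; rewrite hj => /hh_inj [_ hjy].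
  by move: hJ; rewrite hj hjy eqxx.
rewrite big1 ?addr0 //.
move=> I hI; apply: big1 => J _; case: ifP => // /andP[_ /eqP hU].
have [a0|/ha [i hi]] := eqVneq (a I) 0; first by rewrite a0 mulr0 mul0r.
have [b0|/hb [j hj]] := eqVneq (b J) 0; first by rewrite b0 mulr0.
move: hU; rewrite hi hj => /hh_inj [hix _].
by move: hI; rewrite hi hix eqxx.
Qed.

Lemma wsign_r0 (I : {set T4}) : wsign R I finset.set0 = 1.
Proof.
rewrite /wsign; have -> : [set x : T4 * T4 | [&& x.1 \in I, x.2 \in finset.set0 & (x.2 < x.1)%N]]
  = finset.set0 by apply/setP => x; rewrite !inE andbF.
by rewrite cards0 expr0.
Qed.

Lemma wsign_0l (J : {set T4}) : wsign R finset.set0 J = 1.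
Proof.
rewrite /wsign; have -> : [set x : T4 * T4 | [&& x.1 \in finset.set0, x.2 \in J & (x.2 < x.1)%N]]
  = finset.set0 by apply/setP => x; rewrite !inE.
by rewrite cards0 expr0.
Qed.

Lemma wedge_one_r (a : cf) : wedge a (one_form R 2) = a.
Proof.
apply/ffunP => K; rewrite ffunE (bigD1 K) //= (bigD1 finset.set0) //=.
rewrite finset.setI0 finset.setU0 !eqxx /= ffunE eqxx wsign_r0 !mulr1 mul1r.
rewrite big1 ?addr0; last first.
  by move=> J hJ; rewrite ffunE (negbTE hJ) mulr0; case: ifP.
rewrite big1 ?addr0 // => I hI; apply: big1 => J _; case: ifP => // /andP[_ /eqP hU].
rewrite ffunE; case: eqP => [hJ|]; last by rewrite mulr0.
by move: hI; rewrite -hU hJ finset.setU0 eqxx.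
Qed.

Lemma wedge_l0 (a b : cf) : (forall I, a I != 0 -> I = finset.set0) ->
  wedge a b = a finset.set0 *: b.
Proof.
move=> ha; apply/ffunP => K; rewrite ffunE scalefE (bigD1 finset.set0) //= (bigD1 K) //=.
rewrite finset.set0I finset.set0U !eqxx /= wsign_0l mul1r.
rewrite big1 ?addr0; last first.
  move=> J hJ; case: ifP => // /andP[_ /eqP]; rewrite finset.set0U => hJK.
  by move: hJ; rewrite hJK eqxx.
rewrite big1 ?addr0 // => I hI; apply: big1 => J _; case: ifP => // _.
have [a0|/ha hI0] := eqVneq (a I) 0; first by rewrite a0 mulr0 mul0r.
by move: hI; rewrite hI0 eqxx.
Qed.

End G.

Section H.
Variable R : realType.
Local Notation cf := (cform R 2).
Local Notation T4 := 'I_(2+2).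
Local Notation sig := (@conj_idx 2).
Local Notation dw := (@dw R 2).
Local Notation Mx := ('M[R[i]]_2).

Lemma iE : ('i : R[i]) = 'i%C.
Proof. exact: erefl. Qed.

Lemma cE (x : R[i]) : Num.conj x = conjc x.
Proof. exact: erefl. Qed.

Lemma conj_i : conjc ('i : R[i]) = - 'i.
Proof. by rewrite -cE conjCi. Qed.

Lemma sqr_ii : ('i : R[i]) * 'i = -1.
Proof. by rewrite -expr2 sqrCi. Qed.

Lemma dwE (A : Mx) l (K : {set T4}) : dw A l K = \sum_j A l j * (K == [set lshift 2 j])%:R.
Proof. by rewrite sum_ffunE; apply: eq_bigr => j _; rewrite scalefE ffunE. Qed.

Lemma dw_supp (A : Mx) l (K : {set T4}) : dw A l K != 0 -> exists j, K = [set lshift 2 j].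
Proof.
rewrite dwE => /sum_neq0_ex [j].
have [->|] := eqVneq K [set lshift 2 j]; first by exists j.
by move=> _; rewrite mulr0 eqxx.
Qed.

Lemma dw_l (A : Mx) l x : dw A l [set lshift 2 x] = A l x.
Proof.
rewrite dwE (bigD1 x) //= eqxx mulr1 big1 ?addr0 // => j hj.
case: eqP => [/set1_inj/lshift_inj hjx|]; last by rewrite mulr0.
by rewrite hjx eqxx in hj.
Qed.

Lemma cdw_supp (A : Mx) l (K : {set T4}) : conjf (dw A l) K != 0 -> exists j, K = [set rshift 2 j].
Proof.
rewrite conjfE mulf_eq0 negb_or => /andP[_]; rewrite conjc_eq0 => /dw_supp [j hj].
by exists j; rewrite -(conj_imsetK K) hj sig_set1l.
Qed.

Lemma cdw_r (A : Mx) l y : conjf (dw A l) [set rshift 2 y] = conjc (A l y).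
Proof. by rewrite conjfE sig_set1r csign_l dw_l mul1r. Qed.


Lemma isPQ_dw (A : Mx) l : isPQ 1 0 (dw A l).
Proof.
move=> K /dw_supp [j ->]; split.
  have -> : [set lshift 2 j] :&: holo_idx 2 = [set lshift 2 j].
    by apply/finset.setIidPl; rewrite finset.sub1set /holo_idx inE /= ltn_ord.
  by rewrite cards1.
have -> : [set lshift 2 j] :&: anti_idx 2 = finset.set0.
  apply/setP => k; rewrite /anti_idx /holo_idx !inE.
  by case: eqP => // ->; rewrite /= ltn_ord.
by rewrite cards0.
Qed.

Lemma isPQ_cdw (A : Mx) l : isPQ 0 1 (conjf (dw A l)).
Proof.
move=> K /cdw_supp [j ->]; split.
  have -> : [set rshift 2 j] :&: holo_idx 2 = finset.set0.
    apply/setP => k; rewrite /holo_idx !inE.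
    by case: eqP => // ->; rewrite /= ltnNge leq_addr.
  by rewrite cards0.
have -> : [set rshift 2 j] :&: anti_idx 2 = [set rshift 2 j].
  by apply/finset.setIidPl; rewrite finset.sub1set /anti_idx /holo_idx !inE /=.
by rewrite cards1.
Qed.

Lemma Kahler_coef (w : cf) : Kahler w -> exists A : Mx, A \in unitmx /\ isPQ 1 1 w /\
  forall x y, w (hh x y) = ('i / 2) * \sum_l A l x * conjc (A l y).
Proof.
case=> A [hA ->]; exists A; split => //; split.
  apply: isPQ_sum => l; apply: isPQ_scale; exact: (isPQ_wedge (@isPQ_dw A l) (@isPQ_cdw A l)).
move=> x y; rewrite sum_ffunE mulr_sumr; apply: eq_bigr => l _.
rewrite scalefE wedge_lr ?dw_l ?cdw_r //; [exact: dw_supp | exact: cdw_supp].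
Qed.

Lemma wedge_ww (w : cf) : Kahler w -> 0 < wedge w w [set: T4].
Proof.
case/Kahler_coef => A [hA [hw hc]].
rewrite wedge11_T // !hc !sum2.
set de := A 0 0 * A 1 1 - A 0 1 * A 1 0.
have hde : de != 0 by rewrite /de -det2E -unitfE -unitmxE.
have -> : - ('i / 2 * (A 0 0 * conjc (A 0 0) + A 1 0 * conjc (A 1 0)) *
     ('i / 2 * (A 0 1 * conjc (A 0 1) + A 1 1 * conjc (A 1 1)))) +
    'i / 2 * (A 0 0 * conjc (A 0 1) + A 1 0 * conjc (A 1 1)) *
    ('i / 2 * (A 0 1 * conjc (A 0 0) + A 1 1 * conjc (A 1 0))) +
    'i / 2 * (A 0 1 * conjc (A 0 0) + A 1 1 * conjc (A 1 0)) *
    ('i / 2 * (A 0 0 * conjc (A 0 1) + A 1 0 * conjc (A 1 1))) -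
    'i / 2 * (A 0 1 * conjc (A 0 1) + A 1 1 * conjc (A 1 1)) *
    ('i / 2 * (A 0 0 * conjc (A 0 0) + A 1 0 * conjc (A 1 0)))
   = ('i * 'i) * (- (de * conjc de) / 2).
  by rewrite /de rmorphB !rmorphM /=; field.
rewrite sqr_ii mulN1r mulNr opprK divr_gt0 //.
by rewrite lt_def mulf_neq0 ?conjc_eq0 // mulcJ_ge0.
Qed.

End H.

Section MM.
Variable R : realType.
Local Notation cf := (cform R 2).
Local Notation T4 := 'I_(2+2).
Local Notation sig := (@conj_idx 2).
Variable M : 'I_2 -> 'I_2 -> cf.
Hypothesis hPQ : forall i j, isPQ 1 1 (M i j).
Hypothesis hC : forall i j, M i j = conjf (M j i).
Hypothesis hG : Griffiths_positive M.

Lemma cM (x y : R[i]) : conjc (x * y) = conjc x * conjc y. Proof. exact: rmorphM. Qed.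
Lemma cN (x : R[i]) : conjc (- x) = - conjc x. Proof. exact: rmorphN. Qed.
Lemma cD (x y : R[i]) : conjc (x + y) = conjc x + conjc y. Proof. exact: rmorphD. Qed.
Lemma cB (x y : R[i]) : conjc (x - y) = conjc x - conjc y. Proof. exact: rmorphB. Qed.

Lemma ord2P (l : 'I_2) : l = 0 \/ l = 1.
Proof. by case: l => [[|[|m]] hl]; [left | right | ]; try apply: val_inj. Qed.

Definition NN i j a b := (-2 * 'i) * M i j (hh a b).

Lemma ihalf : ('i / 2) * (-2 * 'i) = 1 :> R[i].
Proof.
have -> : ('i / 2) * (-2 * 'i) = - ('i * 'i) * (2 / 2) :> R[i] by ring.
by rewrite sqr_ii opprK mul1r divff // pnatr_eq0.
Qed.

Lemma M_N i j a b : M i j (hh a b) = ('i / 2) * NN i j a b.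
Proof. by rewrite /NN mulrA ihalf mul1r. Qed.

Lemma herm_NN i j a b : NN i j a b = conjc (NN j i b a).
Proof.
rewrite /NN {1}hC conjfE sig_hh csign_hh !cM cN conj_i.
have -> : conjc (2 : R[i]) = 2 by rewrite (conjc_nat _ 2).
ring.
Qed.

Lemma pos_NN (th x : 'I_2 -> R[i]) : (exists i, th i != 0) -> (exists a, x a != 0) ->
  0 < @Qf R NN th x.
Proof.
move=> hth hx; have [A [hA [_ hc]]] := Kahler_coef (hG hth).
have hW a b : \sum_i \sum_j th i * conjc (th j) * M i j (hh a b)
    = ('i / 2) * \sum_l A l a * conjc (A l b).
  rewrite -hc sum_ffunE; apply: eq_bigr => i _; rewrite sum_ffunE; apply: eq_bigr => j _.
  by rewrite scalefE.
have -> : @Qf R NN th x = \sum_a \sum_b x a * conjc (x b) *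
    ((-2 * 'i) * (\sum_i \sum_j th i * conjc (th j) * M i j (hh a b))).
  by rewrite /Qf /NN !sum2; ring.
under eq_bigr => a _ do under eq_bigr => b _ do rewrite hW.
rewrite !sum2.
set y0 := A 0 0 * x 0 + A 0 1 * x 1.
set y1 := A 1 0 * x 0 + A 1 1 * x 1.
have -> : x 0 * conjc (x 0) * (-2 * 'i * ('i / 2 * (A 0 0 * conjc (A 0 0) + A 1 0 * conjc (A 1 0)))) +
   x 0 * conjc (x 1) * (-2 * 'i * ('i / 2 * (A 0 0 * conjc (A 0 1) + A 1 0 * conjc (A 1 1)))) +
   (x 1 * conjc (x 0) * (-2 * 'i * ('i / 2 * (A 0 1 * conjc (A 0 0) + A 1 1 * conjc (A 1 0)))) +
    x 1 * conjc (x 1) * (-2 * 'i * ('i / 2 * (A 0 1 * conjc (A 0 1) + A 1 1 * conjc (A 1 1)))))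
  = (('i / 2) * (-2 * 'i)) * (y0 * conjc y0 + y1 * conjc y1).
  by rewrite /y0 /y1 !cD !cM; ring.
rewrite ihalf mul1r.
have hy : y0 != 0 \/ y1 != 0.
  case: (eqVneq y0 0) => [e0|]; last by left.
  case: (eqVneq y1 0) => [e1|]; last by right.
  exfalso; case: hx => a; apply/negP; rewrite negbK.
  pose X : 'cV[R[i]]_2 := \col_a x a.
  have hAX : A *m X = 0.
    apply/matrixP => l k; rewrite !mxE sum2 !mxE.
    by case: (ord2P l) => ->; [rewrite -/y0 e0 | rewrite -/y1 e1].
  have hX0 : X = 0 by rewrite -(mulKmx hA X) hAX mulmx0.
  by apply/eqP; move/matrixP: hX0 => /(_ a 0); rewrite !mxE.
have g0 (z : R[i]) : 0 <= z * conjc z := mulcJ_ge0 z.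
have g1 (z : R[i]) : z != 0 -> 0 < z * conjc z.
  by move=> hz; rewrite lt_def mulf_neq0 ?conjc_eq0 // g0.
case: hy => [/g1 h|/g1 h]; [exact: ltr_pwDl | exact: ltr_pwDr].
Qed.


Lemma det2M_pos : 0 < det2 M [set: T4].
Proof.
have hT : 0 < @Tval R NN := @core_pos R NN herm_NN pos_NN.
have -> : det2 M [set: T4] = ('i / 2 * ('i / 2)) * (- @Tval R NN).
  by rewrite /det2 subfE !wedge11_T // !M_N /Tval; ring.
have -> : ('i / 2) * ('i / 2) = - (1 / 4) :> R[i].
  have -> : ('i / 2) * ('i / 2) = ('i * 'i) / 4 :> R[i] by field.
  by rewrite sqr_ii mulNr.
rewrite mulNr mulrN opprK mulr_gt0 // divr_gt0 //.
Qed.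

End MM.

Section Final.
Variable R : realType.
Local Notation cf := (cform R 2).
Local Notation T4 := 'I_(2+2).
Local Notation sig := (@conj_idx 2).

Lemma form22_eq (a : cf) : isPQ 2 2 a -> forall K, K != [set: T4] -> a K = 0.
Proof.
move=> ha K hK; case: (eqVneq (a K) 0) => // /(isPQ22_supp ha) hK'.
by rewrite hK' eqxx in hK.
Qed.

Lemma real22 (a : cf) (r : R) : isPQ 2 2 a -> a [set: T4] = (r%:C)%C -> real_form a.
Proof.
move=> ha hr; apply/ffunP => K; rewrite conjfE.
case: (eqVneq K [set: T4]) => [->|hK].
  by rewrite sig_T csign_T mul1r hr conjc_real.
have hsK : sig @: K != [set: T4].
  by apply: contra hK => /eqP h; rewrite -(conj_imsetK K) h sig_T.
by rewrite (form22_eq ha hK) (form22_eq ha hsK) conjc0 mulr0.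
Qed.

Lemma isPQ_sub p q (a b : cf) : isPQ p q a -> isPQ p q b -> isPQ p q (a - b).
Proof.
move=> ha hb K; rewrite subfE => h.
have [a0|/ha //] := eqVneq (a K) 0.
by apply: hb; rewrite a0 sub0r oppr_eq0 in h.
Qed.

Lemma Lef00 (Om : cf) : isPQ 2 2 Om -> Om [set: T4] != 0 -> Lefschetz 0 0 Om.
Proof.
move=> hO hT; split.
- move=> a ha; rewrite (wedge_l0 (a := a)); first exact: isPQ_scale.
  by move=> I; apply: isPQ00_supp ha.
- move=> a ha; rewrite (wedge_l0 (a := a)); last by move=> I; apply: isPQ00_supp ha.
  move=> /ffunP /(_ [set: T4]); rewrite scalefE ffunE => /eqP; rewrite mulf_eq0 (negbTE hT) orbF.
  move=> /eqP a0; apply/ffunP => K; rewrite ffunE.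
  case: (eqVneq K finset.set0) => [->//|hK].
  by case: (eqVneq (a K) 0) => // /(isPQ00_supp ha) hK'; rewrite hK' eqxx in hK.
- move=> b hb.
  exists [ffun K => if K == finset.set0 then b [set: T4] / Om [set: T4] else 0]; split.
    move=> K; rewrite ffunE; case: (eqVneq K finset.set0) => [-> _|]; last by rewrite eqxx.
    by split; rewrite finset.set0I cards0.
  rewrite wedge_l0; last by move=> I; rewrite ffunE; case: (eqVneq I finset.set0) => //; rewrite eqxx.
  apply/ffunP => K; rewrite scalefE ffunE eqxx.
  case: (eqVneq K [set: T4]) => [->|hK]; first by rewrite divfK.
  by rewrite (form22_eq hO hK) (form22_eq hb hK) mulr0.
Qed.

End Final.


Theorem mainTheorem6 (R : realType) (M : 'I_2 -> 'I_2 -> cform R 2) :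
  (forall i j, isPQ 1 1 (M i j)) ->
  (forall i j, M i j = conjf (M j i)) ->
  Griffiths_positive M ->
  forall w : cform R 2, Kahler w -> Hodge_Riemann 2 w (det2 M).
Proof.
move=> hPQ hC hG w hw.
have hOm : isPQ 2 2 (det2 M).
  exact: isPQ_sub (isPQ_wedge (hPQ 0 0) (hPQ 1 1)) (isPQ_wedge (hPQ 0 1) (hPQ 1 0)).
have [A [_ [hw11 _]]] := Kahler_coef hw.
have hww : isPQ 2 2 (wedge w w) := isPQ_wedge hw11 hw11.
have [Ea a0] := posC _ _ (det2M_pos hPQ hC hG).
have [Eb b0] := posC _ _ (wedge_ww hw).
set a := complex.Re _ in Ea a0.
set b := complex.Re _ in Eb b0.
have hOT : det2 M [set: 'I_(2+2)] != 0 by rewrite Ea; apply: lt0r_neq0; rewrite ltcE /= eqxx.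
have [c1 c2] := hOm _ hOT.
split => //; first exact: real22 hOm Ea.
move=> p q hpq.
have [-> ->] : p = 0%N /\ q = 0%N.
  by move: hpq; rewrite subnn => /eqP; rewrite addn_eq0 => /andP[/eqP -> /eqP ->].
pose P := fun t : R => [ffun K : {set 'I_(2+2)} => if K == [set: 'I_(2+2)]
   then ((((1 - t) * a + t * b)%:C)%C : R[i]) else 0].
have hPT t : 0 <= t <= 1 -> 0 < (1 - t) * a + t * b.
  move=> /andP[t0 t1]; have [->|ht1] := eqVneq t 1; first by rewrite subrr mul0r add0r mul1r.
  have : 0 < 1 - t by rewrite subr_gt0 lt_neqAle ht1 t1.
  by move=> h; apply: ltr_pwDl; [apply: mulr_gt0 | apply: mulr_ge0; rewrite // ltW].
have hPQt t : isPQ 2 2 (P t).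
  move=> K; rewrite ffunE; case: (eqVneq K [set: 'I_(2+2)]) => [-> _|]; last by rewrite eqxx.
  by split.
exists P; split.
- apply/ffunP => K; rewrite ffunE; case: (eqVneq K [set: 'I_(2+2)]) => [->|hK].
    by rewrite subr0 mul1r mul0r addr0 -Ea.
  by rewrite (form22_eq hOm hK).
- rewrite /wpow /= wedge_one_r.
  apply/ffunP => K; rewrite ffunE; case: (eqVneq K [set: 'I_(2+2)]) => [->|hK].
    by rewrite subrr mul0r add0r mul1r -Eb.
  by rewrite (form22_eq hww hK).
- move=> K; split.
    apply: continuous_subspaceT.
    have -> : (fun t => complex.Re (P t K)) = (fun t => if K == [set: 'I_(2+2)] then a + (b - a) * t else 0).
      apply: boolp.funext => t; rewrite ffunE; case: ifP => //= _; ring.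
    case: (K == [set: 'I_(2+2)]); last exact: cst_continuous.
    move=> t; apply: continuousD; [exact: cst_continuous | exact: mulrl_continuous].
  apply: continuous_subspaceT.
  have -> : (fun t => complex.Im (P t K)) = (fun _ => 0).
    by apply: boolp.funext => t; rewrite ffunE; case: ifP.
  exact: cst_continuous.
- move=> t ht; split => //; apply: (real22 (hPQt t)); rewrite ffunE eqxx; reflexivity.
- move=> t ht r; rewrite leqn0 => /eqP ->; rewrite muln0 /= wedge_one_r.
  apply: Lef00 => //; rewrite ffunE eqxx; apply: lt0r_neq0; rewrite ltcE /= eqxx /=.
  exact: hPT.
Qed.
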